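(* In the setting below with $P=\mathfrak S$ and the absolute error criterion, assume $\lambda\in\ell_{\tau_0}$ for some $\tau_0\in(0,\infty)$. Then: (i) if $\lambda_1<1$, $\{S_d\}$ is strongly polynomially tractable; (ii) if $\lambda_1=1>\lambda_2$ and $b_d\in O(1)$, $\{S_d\}$ is strongly polynomially tractable; (iii) if $\lambda_1=1$ and $b_d\in O(\ln d)$, $\{S_d\}$ is polynomially tractable.
   Context: Setting: $S_1:H_1\to G_1$ is a compact linear operator between real Hilbert spaces ($H_1$ infinite-dimensional separable); $\lambda=(\lambda_m)_{m\in\mathbb N}$, $\lambda_1\ge\lambda_2\ge\dots\ge0$, are the eigenvalues of $S_1^\dagger S_1$. $S_d=S_1^{\otimes d}:H_1^{\otimes d}\to G_1^{\otimes d}$. For each $d$ fix $\emptyset\ne I_d=\{i_1<\dots<i_{a_d}\}\subset\{1,\dots,d\}$ ($I_1=\{1\}$), put $a_d=\#I_d$, $b_d=d-a_d$, and fix one type $P\in\{\mathfrak S,\mathfrak A\}$ for all $d$; the problem $\{S_d\}$ is the family of restrictions of $S_d$ to the $I_d$-symmetric subspace (if $P=\mathfrak S$) or $I_d$-antisymmetric subspace (if $P=\mathfrak A$) of $H_1^{\otimes d}$, i.e. the range of $\frac1{a_d!}\sum_{\pi}(\pm1)U_\pi$, the sum over permutations $\pi$ of $\{1,\dots,d\}$ fixing all points outside $I_d$, $U_\pi(f_1\otimes\cdots\otimes f_d)=f_{\pi(1)}\otimes\cdots\otimes f_{\pi(d)}$, sign $(-1)^{|\pi|}$ used for $\mathfrak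 A$. Let $\nabla_d=\{k\in\mathbb N^d:k_{i_1}\le\dots\le k_{i_{a_d}}\}$ for $P=\mathfrak S$ and with strict inequalities for $P=\mathfrak A$; $\lambda_{d,k}=\prod_{l=1}^d\lambda_{k_l}$; $\psi:\mathbb N\to\nabla_d$ a bijection with $\lambda_{d,\psi(1)}\ge\lambda_{d,\psi(2)}\ge\cdots$. These are exactly the eigenvalues of $S_d^\dagger S_d$ on the subspace, and the information complexity (absolute error) is $n(\epsilon,d)=\#\{k\in\nabla_d:\lambda_{d,k}>\epsilon^2\}$, the initial error $\epsilon^{\rm init}_d=\sqrt{\lambda_{d,\psi(1)}}$ (equal to $\lambda_1^{d/2}$ if $P=\mathfrak S$, and $\sqrt{\lambda_1^{b_d}\lambda_1\lambda_2\cdots\lambda_{a_d}}$ if $P=\mathfrak A$). Polynomially tractable: $\exists C,p>0,q\ge0$ with $n(\epsilon,d)\le C\epsilon^{-p}d^q$ for all $d\in\mathbb N,\epsilon\in(0,1]$; strongly polynomially tractable: this with $q=0$. Standing assumptions: $\lambda_2>0$ and $\epsilon_d^{\rm init}>0$ for all $d$. $\ell_\tau$: sequences with $\|\lambda\|_{\ell_\tau}^\tau=\sum_m\lambda_m^\tau<\infty$. *)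

(* Defs.v *)
From Stdlib Require Import Reals Lra Lia List.
Import ListNotations.
Open Scope R_scope.

(* Conventions (0-based): lam m is the paper's lambda_{m+1}; a multi-index
   k in N^d is a list of length d of (0-based) indices; positions of
   {1..d} are 0..d-1.  I d : nat -> bool is the indicator of I_d (only
   positions < d matter). *)

Definition powr (x tau : R) : R := if Req_EM_T x 0 then 0 else Rpower x tau.

Definition in_ell (lam : nat -> R) (tau : R) : Prop :=
  exists l, Un_cv (fun N => sum_f_R0 (fun m => powr (lam m) tau) N) l.

Definition prodlam (lam : nat -> R) (k : list nat) : R :=
  fold_right (fun m acc => lam m * acc) 1 k.

Definition a_d (I : nat -> nat -> bool) (d : nat) : nat :=
  length (filter (I d) (seq 0 d)).
Definition b_d (I : nat -> nat -> bool) (d : nat) : nat := (d - a_d I d)%nat.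

Definition in_nabla_S (I : nat -> nat -> bool) (d : nat) (k : list nat) : Prop :=
  length k = d /\
  forall i j, (i < j < d)%nat -> I d i = true -> I d j = true ->
    (nth i k 0 <= nth j k 0)%nat.

(* n(eps,d) <= N, where n(eps,d) = #{k in nabla_d : lambda_{d,k} > eps^2}
   (stated for a possibly infinite set: every finite duplicate-free
   family of such k has at most N elements). *)
Definition n_le (lam : nat -> R) (I : nat -> nat -> bool) (eps : R) (d : nat)
  (N : R) : Prop :=
  forall L : list (list nat), NoDup L ->
    (forall k, In k L -> in_nabla_S I d k /\ prodlam lam k > eps ^ 2) ->
    INR (length L) <= N.

Definition poly_tractable (lam : nat -> R) (I : nat -> nat -> bool) : Prop :=
  exists C p q, 0 < C /\ 0 < p /\ 0 <= q /\
    forall d eps, (1 <= d)%nat -> 0 < eps <= 1 ->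
      n_le lam I eps d (C * Rpower eps (- p) * Rpower (INR d) q).

Definition strongly_poly_tractable (lam : nat -> R) (I : nat -> nat -> bool) : Prop :=
  exists C p, 0 < C /\ 0 < p /\
    forall d eps, (1 <= d)%nat -> 0 < eps <= 1 ->
      n_le lam I eps d (C * Rpower eps (- p)).

(* Main.v *)
Require Import Defs.
From Stdlib Require Import Reals List Lia Lra Classical.
Import ListNotations.
Open Scope R_scope.


Fixpoint lsum {A} (f : A -> R) (l : list A) : R :=
  match l with [] => 0 | x :: l' => f x + lsum f l' end.

Lemma lsum_app {A} (f : A -> R) l1 l2 : lsum f (l1 ++ l2) = lsum f l1 + lsum f l2.
Proof. induction l1; simpl; [lra|rewrite IHl1; lra]. Qed.

Lemma lsum_map {A B} (f : B -> R) (g : A -> B) l : lsum f (map g l) = lsum (fun x => f (g x)) l.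
Proof. induction l; simpl; [lra|rewrite IHl; lra]. Qed.

Lemma lsum_flat_map {A B} (f : B -> R) (g : A -> list B) l :
  lsum f (flat_map g l) = lsum (fun x => lsum f (g x)) l.
Proof. induction l; simpl; [lra|rewrite lsum_app, IHl; lra]. Qed.

Lemma lsum_scal {A} (f : A -> R) c l : lsum (fun x => c * f x) l = c * lsum f l.
Proof. induction l; simpl; [lra|rewrite IHl; lra]. Qed.

Lemma lsum_le {A} (f g : A -> R) l : (forall x, In x l -> f x <= g x) -> lsum f l <= lsum g l.
Proof. induction l; simpl; intros H; [lra|].
  specialize (IHl (fun x Hx => H x (or_intror Hx))). specialize (H a (or_introl eq_refl)). lra. Qed.

Lemma lsum_nonneg {A} (f : A -> R) l : (forall x, In x l -> 0 <= f x) -> 0 <= lsum f l.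
Proof. intros H. apply Rle_trans with (lsum (fun _ => 0) l).
  - clear H. induction l; simpl; lra.
  - apply lsum_le; auto. Qed.

Lemma lsum_sub {A} (f : A -> R) (L E : list A) :
  (forall x, 0 <= f x) -> NoDup L -> incl L E -> lsum f L <= lsum f E.
Proof.
  intros Hf HL. revert E. induction HL as [|x L Hx HL IH]; intros E Hi; simpl.
  - apply lsum_nonneg; auto.
  - assert (Hxe : In x E) by (apply Hi; left; auto).
    destruct (in_split _ _ Hxe) as [E1 [E2 ->]].
    rewrite lsum_app. simpl.
    assert (lsum f L <= lsum f (E1 ++ E2)).
    { apply IH. intros y Hy. assert (In y (E1 ++ x :: E2)) by (apply Hi; right; auto).
      apply in_app_or in H. apply in_or_app. destruct H as [H|[H|H]]; auto.
      subst; contradiction. }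
    rewrite lsum_app in H. lra.
Qed.

Lemma length_le_lsum {A} (f : A -> R) l : (forall x, In x l -> 1 <= f x) -> INR (length l) <= lsum f l.
Proof. induction l; intros H; [simpl; lra|]. cbn [length lsum].
  specialize (IHl (fun x Hx => H x (or_intror Hx))). specialize (H a (or_introl eq_refl)).
  rewrite S_INR; lra. Qed.

Lemma NoDup_map_in {A B} (f : A -> B) l : NoDup l ->
  (forall x y, In x l -> In y l -> f x = f y -> x = y) -> NoDup (map f l).
Proof.
  induction 1 as [|x l Hx Hl IH]; intros Hi; simpl; constructor.
  - intros Hin. apply in_map_iff in Hin. destruct Hin as [y [Hy1 Hy2]].
    assert (y = x) by (apply Hi; simpl; auto). subst; contradiction.
  - apply IH. intros; apply Hi; simpl; auto.
Qed.

Lemma prodlam_app mu x y : prodlam mu (x ++ y) = prodlam mu x * prodlam mu y.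
Proof. induction x; simpl; [lra|rewrite IHx; lra]. Qed.

Lemma prodlam_nonneg mu k : (forall m, 0 <= mu m) -> 0 <= prodlam mu k.
Proof. intros H; induction k; simpl; [lra|]. apply Rmult_le_pos; auto. Qed.

Lemma prodlam_le1 mu k : (forall m, 0 <= mu m <= 1) -> prodlam mu k <= 1.
Proof. intros H; induction k; simpl; [lra|].
  pose proof (prodlam_nonneg mu k (fun m => proj1 (H m))). specialize (H a).
  apply Rle_trans with (1 * prodlam mu k); [apply Rmult_le_compat_r|]; lra. Qed.

Definition prodE (X Y : list (list nat)) : list (list nat) :=
  flat_map (fun x => map (fun y => x ++ y) Y) X.

Lemma lsum_app_l mu a Y : lsum (fun y => prodlam mu (a ++ y)) Y = prodlam mu a * lsum (prodlam mu) Y.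
Proof. induction Y; simpl; [ring|]. rewrite prodlam_app, IHY. ring. Qed.

Lemma lsum_prodE mu X Y :
  lsum (prodlam mu) (prodE X Y) = lsum (prodlam mu) X * lsum (prodlam mu) Y.
Proof.
  unfold prodE. rewrite lsum_flat_map. induction X; simpl; [ring|].
  rewrite IHX, lsum_map, lsum_app_l. ring.
Qed.

Lemma In_prodE X Y x y : In x X -> In y Y -> In (x ++ y) (prodE X Y).
Proof. intros. unfold prodE. apply in_flat_map. exists x. split; auto. apply in_map; auto. Qed.

Fixpoint allL (n : nat) (X : list nat) : list (list nat) :=
  match n with O => [[]] | S n' => prodE (map (fun m => [m]) X) (allL n' X) end.

Lemma lsum_allL mu n X : lsum (prodlam mu) (allL n X) = (lsum mu X) ^ n.
Proof. assert (E : lsum (fun x => prodlam mu [x]) X = lsum mu X).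
  { clear n. induction X; cbn [lsum]; [ring|]. rewrite IHX; simpl; ring. }
  induction n; simpl; [ring|]. rewrite lsum_prodE, IHn, lsum_map, E. ring. Qed.

Lemma In_allL n X k : length k = n -> (forall y, In y k -> In y X) -> In k (allL n X).
Proof. revert k; induction n; intros k Hl Hk; destruct k; try discriminate.
  - simpl; auto.
  - change (n0 :: k) with ([n0] ++ k). cbn [allL]. apply In_prodE.
    + apply (in_map (fun m => [m])); apply Hk; simpl; auto.
    + apply IHn; simpl in Hl; auto. intros; apply Hk; simpl; auto.
Qed.

Fixpoint srt (l : list nat) : Prop :=
  match l with [] => True | x :: l' => Forall (le x) l' /\ srt l' end.

Lemma Forall_filter' (P : nat -> Prop) (f : nat -> bool) l : Forall P l -> Forall P (filter f l).
Proof. rewrite !Forall_forall. intros H x Hx. apply filter_In in Hx. apply H; tauto. Qed.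

Lemma srt_filter (f : nat -> bool) l : srt l -> srt (filter f l).
Proof. induction l; simpl; auto. intros [H1 H2]. destruct (f a); simpl; auto.
  split; auto. apply Forall_filter'; auto. Qed.

Lemma filter_all_true (f : nat -> bool) l : (forall x, In x l -> f x = true) -> filter f l = l.
Proof. induction l; simpl; intros H; auto. rewrite H; auto. f_equal; auto. Qed.
Lemma filter_all_false (f : nat -> bool) l : (forall x, In x l -> f x = false) -> filter f l = [].
Proof. induction l; simpl; intros H; auto. rewrite H; auto. Qed.

Lemma srt_split t v : srt v ->
  v = filter (fun y => Nat.ltb y t) v ++ filter (fun y => Nat.leb t y) v.
Proof.
  induction v as [|x v IH]; simpl; auto. intros [H1 H2].
  destruct (Nat.ltb x t) eqn:E.
  - apply Nat.ltb_lt in E. replace (Nat.leb t x) with false by (symmetry; apply Nat.leb_gt; lia).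
    simpl. f_equal. auto.
  - apply Nat.ltb_ge in E. replace (Nat.leb t x) with true by (symmetry; apply Nat.leb_le; lia).
    rewrite Forall_forall in H1.
    rewrite filter_all_false, filter_all_true; auto.
    + intros y Hy. apply Nat.leb_le. specialize (H1 y Hy). lia.
    + intros y Hy. apply Nat.ltb_ge. specialize (H1 y Hy). lia.
Qed.

Lemma all_repeat (s : nat) l : (forall y, In y l -> y = s) -> l = repeat s (length l).
Proof. induction l; simpl; intros H; auto. rewrite (H a) by auto. f_equal; auto. Qed.

Lemma lsum_const {A} (c : R) (l : list A) : lsum (fun _ => c) l = c * INR (length l).
Proof. induction l; [simpl; ring|]. cbn [lsum length]. rewrite S_INR, IHl. ring. Qed.

Fixpoint Esrt (s q n : nat) : list (list nat) :=
  match q with O => [[]] | S q' => prodE (map (repeat s) (seq 0 (S n))) (Esrt (S s) q' n) end.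

Lemma lsum_Esrt mu s q n : (forall m, 0 <= mu m <= 1) ->
  0 <= lsum (prodlam mu) (Esrt s q n) <= INR (S n) ^ q.
Proof.
  intros Hmu. revert s; induction q; intros s; cbn [Esrt].
  - simpl. lra.
  - rewrite lsum_prodE. destruct (IHq (S s)) as [A B].
    assert (0 <= lsum (prodlam mu) (map (repeat s) (seq 0 (S n))) <= INR (S n)).
    { rewrite lsum_map. split.
      - apply lsum_nonneg; intros; apply prodlam_nonneg; intros; apply Hmu.
      - apply Rle_trans with (lsum (fun _ => 1) (seq 0 (S n))).
        + apply lsum_le. intros; apply prodlam_le1; auto.
        + rewrite lsum_const, length_seq; lra. }
    change (INR (S n) ^ S q) with (INR (S n) * INR (S n) ^ q). split; [apply Rmult_le_pos; lra|].
    apply Rmult_le_compat; lra.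
Qed.

Lemma In_Esrt s q n v : srt v -> (length v <= n)%nat ->
  (forall y, In y v -> s <= y < s + q)%nat -> In v (Esrt s q n).
Proof.
  revert s v; induction q; intros s v Hs Hl Hy; cbn [Esrt].
  - destruct v; simpl; auto. specialize (Hy n0 (or_introl eq_refl)). lia.
  - rewrite (srt_split (S s) v Hs).
    apply In_prodE.
    + apply in_map_iff. exists (length (filter (fun y => Nat.ltb y (S s)) v)). split.
      * symmetry. apply all_repeat. intros y Hy'. apply filter_In in Hy'.
        destruct Hy' as [H1 H2]. apply Nat.ltb_lt in H2. specialize (Hy y H1). lia.
      * apply in_seq. pose proof (filter_length_le (fun y => Nat.ltb y (S s)) v). lia.
    + apply IHq.
      * apply srt_filter; auto.
      * pose proof (filter_length_le (fun y => Nat.leb (S s) y) v). lia.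
      * intros y Hy'. apply filter_In in Hy'. destruct Hy' as [H1 H2].
        apply Nat.leb_le in H2. specialize (Hy y H1). lia.
Qed.

Definition V (a r N : nat) : list (list nat) :=
  flat_map (fun j => map (fun x => repeat 0%nat (a - length x) ++ x)
     (prodE (Esrt 1 (r-1) a) (allL j (seq r N)))) (seq 0 (S a)).

Lemma In_V a r N v : srt v -> length v = a -> (forall y, In y v -> y < N)%nat ->
  (1 <= r)%nat -> In v (V a r N).
Proof.
  intros Hs Hl HN Hr.
  pose proof (srt_split 1 v Hs) as Hsp.
  set (Z := filter (fun y => Nat.ltb y 1) v) in *.
  set (x := filter (fun y => Nat.leb 1 y) v) in *.
  assert (HZ : Z = repeat 0%nat (length Z)).
  { apply all_repeat. intros y Hy. unfold Z in Hy. apply filter_In in Hy.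
    destruct Hy as [_ H]. apply Nat.ltb_lt in H. lia. }
  assert (HlZ : length Z = (a - length x)%nat).
  { rewrite Hsp in Hl. rewrite length_app in Hl. lia. }
  assert (Hxs : srt x) by (apply srt_filter; auto).
  assert (Hxin : forall y, In y x -> In y v /\ (1 <= y)%nat).
  { intros y Hy. unfold x in Hy. apply filter_In in Hy. destruct Hy as [H1 H2].
    apply Nat.leb_le in H2. auto. }
  pose proof (srt_split r x Hxs) as Hsx.
  set (pre := filter (fun y => Nat.ltb y r) x) in *.
  set (w := filter (fun y => Nat.leb r y) x) in *.
  assert (Hlx : (length x <= a)%nat).
  { rewrite Hsp in Hl. rewrite length_app in Hl. lia. }
  unfold V. apply in_flat_map. exists (length w). split.
  - apply in_seq. assert (length x = length pre + length w)%nat by (rewrite Hsx at 1; apply length_app). lia.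
  - apply in_map_iff. exists x. split.
    + transitivity (Z ++ x); [rewrite HZ; rewrite HlZ; auto | symmetry; exact Hsp].
    + rewrite Hsx. apply In_prodE.
      * apply In_Esrt.
        -- apply srt_filter; auto.
        -- assert (length x = length pre + length w)%nat by (rewrite Hsx at 1; apply length_app). lia.
        -- intros y Hy. unfold pre in Hy. apply filter_In in Hy. destruct Hy as [H1 H2].
           apply Nat.ltb_lt in H2. apply Hxin in H1. lia.
      * apply In_allL; auto. intros y Hy. unfold w in Hy. apply filter_In in Hy.
        destruct Hy as [H1 H2]. apply Nat.leb_le in H2. apply Hxin in H1.
        destruct H1 as [H1 _]. apply HN in H1. apply in_seq. lia.
Qed.

Lemma geom_sum s m : lsum (fun j => (/2) ^ j) (seq s m) = 2 * (/2) ^ s - 2 * (/2) ^ (s + m).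
Proof.
  revert s; induction m; intros s.
  - rewrite Nat.add_0_r. simpl. ring.
  - cbn [seq lsum]. rewrite IHm. replace (S s + m)%nat with (s + S m)%nat by lia.
    simpl. field.
Qed.

Lemma lsum_V mu a r N : (forall m, 0 <= mu m <= 1) -> lsum mu (seq r N) <= /2 ->
  lsum (prodlam mu) (V a r N) <= INR (S a) ^ (r-1) * 2.
Proof.
  intros Hmu Hh. unfold V. rewrite lsum_flat_map.
  assert (Hn : forall m, 0 <= mu m) by (intros; apply Hmu).
  assert (0 <= lsum mu (seq r N)) by (apply lsum_nonneg; auto).
  destruct (lsum_Esrt mu 1 (r-1) a Hmu) as [E1 E2].
  apply Rle_trans with (lsum (fun j => INR (S a) ^ (r-1) * (/2)^j) (seq 0 (S a))).
  - apply lsum_le. intros j _. rewrite lsum_map.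
    apply Rle_trans with (lsum (prodlam mu) (prodE (Esrt 1 (r - 1) a) (allL j (seq r N)))).
    + apply lsum_le. intros x _. rewrite prodlam_app.
      pose proof (prodlam_nonneg mu x Hn).
      pose proof (prodlam_le1 mu (repeat 0%nat (a - length x)) Hmu).
      pose proof (prodlam_nonneg mu (repeat 0%nat (a - length x)) Hn). nra.
    + rewrite lsum_prodE, lsum_allL. apply Rmult_le_compat; auto.
      * apply pow_le; auto.
      * apply pow_incr; lra.
  - rewrite lsum_scal, geom_sum. assert (0 <= (/2)^(0 + S a)) by (apply pow_le; lra).
    assert (0 <= INR (S a) ^ (r-1)) by (apply pow_le; apply pos_INR). replace ((/2)^0) with 1 by (simpl; ring). nra.
Qed.

Fixpoint sel (p : nat -> bool) (i : nat) (k : list nat) : list nat :=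
  match k with [] => [] | x :: k' => if p i then x :: sel p (S i) k' else sel p (S i) k' end.

Lemma sel_len p i k : length (sel p i k) = length (filter p (seq i (length k))).
Proof. revert i; induction k; intros i; simpl; auto. destruct (p i); simpl; auto. Qed.

Lemma filter_len_compl (p : nat -> bool) l :
  (length (filter p l) + length (filter (fun j => negb (p j)) l))%nat = length l.
Proof. induction l; simpl; auto. destruct (p a); simpl; lia. Qed.

Lemma sel_in p i k y : In y (sel p i k) -> In y k.
Proof. revert i; induction k; intros i; simpl; auto. destruct (p i); simpl.
  - intros [H|H]; auto. right; eapply IHk; eauto.
  - intros H; right; eapply IHk; eauto.
Qed.

Lemma sel_prod mu p i k :
  prodlam mu (sel (fun j => negb (p j)) i k) * prodlam mu (sel p i k) = prodlam mu k.
Proof. revert i; induction k; intros i; simpl; [ring|]. rewrite <- (IHk (S i)).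
  destruct (p i); simpl; ring. Qed.

Lemma sel_inj p i k1 k2 : length k1 = length k2 ->
  sel (fun j => negb (p j)) i k1 = sel (fun j => negb (p j)) i k2 ->
  sel p i k1 = sel p i k2 -> k1 = k2.
Proof.
  revert i k2; induction k1; intros i k2 Hl H1 H2; destruct k2; try discriminate; auto.
  simpl in *. destruct (p i); simpl in *.
  - injection H2; intros; subst. f_equal. eapply IHk1; eauto.
  - injection H1; intros; subst. f_equal. eapply IHk1; eauto.
Qed.

Lemma app_inv_len (a1 a2 b1 b2 : list nat) : length a1 = length a2 -> a1 ++ b1 = a2 ++ b2 ->
  a1 = a2 /\ b1 = b2.
Proof. revert a2; induction a1; intros a2 Hl H; destruct a2; try discriminate; simpl in *; auto.
  injection H; intros. destruct (IHa1 a2) as [-> ->]; auto. subst; auto. Qed.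

Lemma sel_in_pos p i k y : In y (sel p i k) ->
  exists b, (b < length k)%nat /\ p (i + b)%nat = true /\ nth b k 0%nat = y.
Proof.
  revert i; induction k; intros i; simpl; [tauto|].
  destruct (p i) eqn:E; simpl.
  - intros [H|H].
    + exists 0%nat. rewrite Nat.add_0_r. repeat split; auto; lia.
    + destruct (IHk (S i) H) as [b [H1 [H2 H3]]]. exists (S b).
      replace (i + S b)%nat with (S i + b)%nat by lia. repeat split; auto; lia.
  - intros H. destruct (IHk (S i) H) as [b [H1 [H2 H3]]]. exists (S b).
    replace (i + S b)%nat with (S i + b)%nat by lia. repeat split; auto; lia.
Qed.

Lemma sel_srt p i k :
  (forall a b, (a < b < length k)%nat -> p (i + a)%nat = true -> p (i + b)%nat = true ->
     (nth a k 0 <= nth b k 0)%nat) -> srt (sel p i k).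
Proof.
  revert i; induction k as [|x k IH]; intros i H; simpl; auto.
  assert (IH' : srt (sel p (S i) k)).
  { apply IH. intros a b Hab Ha Hb. apply (H (S a) (S b)); simpl; try lia.
    - replace (i + S a)%nat with (S i + a)%nat by lia; auto.
    - replace (i + S b)%nat with (S i + b)%nat by lia; auto. }
  destruct (p i) eqn:E; simpl; auto. split; auto.
  apply Forall_forall. intros y Hy. destruct (sel_in_pos _ _ _ _ Hy) as [b [H1 [H2 H3]]].
  subst y. apply (H 0%nat (S b)); simpl; try lia.
  - rewrite Nat.add_0_r; auto.
  - replace (i + S b)%nat with (S i + b)%nat by lia; auto.
Qed.

Lemma main_count (mu : nat -> R) (I : nat -> nat -> bool) (d r : nat) (S0 c : R) :
 (forall m, 0 <= mu m <= 1) -> (1 <= r)%nat -> 0 <= S0 ->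
 (forall N, lsum mu (seq 0 N) <= S0) -> (forall N, lsum mu (seq r N) <= /2) -> 0 < c ->
 forall L, NoDup L -> (forall k, In k L -> in_nabla_S I d k /\ prodlam mu k > c) ->
 INR (length L) <= / c * (S0 ^ b_d I d * (INR (S (a_d I d)))^(r-1) * 2).
Proof.
  intros Hmu Hr HS0 HS Hh Hc L HL Hk.
  set (p := I d). set (np := fun j => negb (p j)).
  set (phi := fun k => sel np 0 k ++ sel p 0 k).
  set (N := S (list_max (concat L))).
  set (E := prodE (allL (b_d I d) (seq 0 N)) (V (a_d I d) r N)).
  assert (Hn : forall m, 0 <= mu m) by (intros; apply Hmu).
  assert (HN : forall k y, In k L -> In y k -> (y < N)%nat).
  { intros k y H1 H2. assert (Hc' : In y (concat L)) by (apply in_concat; eauto).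
    pose proof (proj1 (list_max_le (concat L) (list_max (concat L))) (le_n _)) as F.
    rewrite Forall_forall in F. specialize (F y Hc'). unfold N. lia. }
  assert (Hlen : forall k, length k = d -> length (sel np 0 k) = b_d I d /\ length (sel p 0 k) = a_d I d).
  { intros k Hkl. rewrite !sel_len, Hkl. unfold b_d, a_d.
    pose proof (filter_len_compl p (seq 0 d)). rewrite length_seq in H. unfold np; fold p. split; lia. }
  assert (Hphi : forall k, prodlam mu (phi k) = prodlam mu k).
  { intros k. unfold phi. rewrite prodlam_app. apply sel_prod. }
  apply Rle_trans with (lsum (fun x => / c * prodlam mu x) (map phi L)).
  - rewrite <- (length_map phi L). apply length_le_lsum.
    intros x Hx. apply in_map_iff in Hx. destruct Hx as [k [<- Hk']].
    rewrite Hphi. destruct (Hk k Hk') as [_ H]. 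
    apply Rmult_le_reg_l with c; auto. rewrite <- Rmult_assoc, Rinv_r by lra. lra.
  - apply Rle_trans with (lsum (fun x => / c * prodlam mu x) E).
    + apply lsum_sub.
      * intros. apply Rmult_le_pos; [apply Rlt_le, Rinv_0_lt_compat; auto|apply prodlam_nonneg; auto].
      * apply NoDup_map_in; auto. intros x y Hx Hy Hxy.
        destruct (Hk x Hx) as [[Hlx _] _]. destruct (Hk y Hy) as [[Hly _] _].
        unfold phi in Hxy. destruct (Hlen x Hlx) as [A1 _]. destruct (Hlen y Hly) as [A2 _].
        apply app_inv_len in Hxy; [|congruence]. destruct Hxy as [H1 H2].
        apply (sel_inj p 0 x y); auto; congruence.
      * intros z Hz. apply in_map_iff in Hz. destruct Hz as [k [<- Hk']].
        destruct (Hk k Hk') as [[Hlk Hsrt] _]. destruct (Hlen k Hlk) as [A1 A2].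
        unfold phi, E. apply In_prodE.
        -- apply In_allL; auto. intros y Hy. apply in_seq. apply sel_in in Hy.
           specialize (HN k y Hk' Hy). lia.
        -- apply In_V; auto.
           ++ apply sel_srt. intros a b Hab Ha Hb. apply Hsrt; simpl in *; lia || auto.
           ++ intros y Hy. apply sel_in in Hy. eauto.
    + rewrite lsum_scal. apply Rmult_le_compat_l; [apply Rlt_le, Rinv_0_lt_compat; auto|].
      unfold E. rewrite lsum_prodE, lsum_allL. rewrite Rmult_assoc.
      apply Rmult_le_compat.
      * apply pow_le. apply lsum_nonneg; auto.
      * apply lsum_nonneg. intros; apply prodlam_nonneg; auto.
      * apply pow_incr. split; [apply lsum_nonneg; auto|apply HS].
      * apply lsum_V; auto.
Qed.

Lemma exp_le' x y : x <= y -> exp x <= exp y.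
Proof. intros H. destruct (Rle_lt_or_eq_dec _ _ H) as [H'|H'].
  - apply Rlt_le, exp_increasing; auto. - subst; lra. Qed.

Lemma ln_le' x y : 0 < x -> x <= y -> ln x <= ln y.
Proof. intros H0 H. destruct (Rle_lt_or_eq_dec _ _ H) as [H'|H'].
  - apply Rlt_le, ln_increasing; auto. - subst; lra. Qed.

Lemma pow_lt_strict x y n : 0 <= x < y -> (1 <= n)%nat -> x ^ n < y ^ n.
Proof. intros H Hn. induction n; [lia|]. destruct n.
  - simpl. lra.
  - assert (x ^ S n < y ^ S n) by (apply IHn; lia).
    change (x * x ^ S n < y * y ^ S n).
    assert (0 <= x ^ S n) by (apply pow_le; lra). nra. Qed.

Lemma powr_nonneg x t : 0 <= powr x t.
Proof. unfold powr. destruct (Req_EM_T x 0); [lra|]. unfold Rpower. apply Rlt_le, exp_pos. Qed.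

Lemma powr_pos x t : 0 < x -> powr x t = Rpower x t.
Proof. intros H. unfold powr. destruct (Req_EM_T x 0); [lra|auto]. Qed.

Lemma powr_mult x y t : 0 <= x -> 0 <= y -> powr (x * y) t = powr x t * powr y t.
Proof. intros Hx Hy.
  destruct (Req_EM_T x 0) as [->|Hx']. { rewrite Rmult_0_l. unfold powr. destruct (Req_EM_T 0 0); [ring|lra]. }
  destruct (Req_EM_T y 0) as [->|Hy']. { rewrite Rmult_0_r. unfold powr. destruct (Req_EM_T 0 0); [ring|lra]. }
  rewrite !powr_pos by nra. unfold Rpower. rewrite ln_mult by lra. rewrite <- exp_plus. f_equal; ring. Qed.

Lemma prodlam_powr lam k t : (forall m, 0 <= lam m) ->
  prodlam (fun m => powr (lam m) t) k = powr (prodlam lam k) t.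
Proof. intros H. induction k; simpl.
  - rewrite powr_pos by lra. unfold Rpower. rewrite ln_1, Rmult_0_r, exp_0. auto.
  - rewrite IHk, powr_mult; auto. apply prodlam_nonneg; auto. Qed.

Lemma prodlam_pow f k n : prodlam (fun m => f m ^ n) k = (prodlam f k) ^ n.
Proof. induction k; simpl. - rewrite pow1; auto. - rewrite IHk, Rpow_mult_distr; auto. Qed.

Lemma powr_mono x y t : 0 <= x <= y -> 0 < t -> powr x t <= powr y t.
Proof. intros H Ht. destruct (Req_EM_T x 0) as [->|Hx].
  - unfold powr at 1. destruct (Req_EM_T 0 0); [apply powr_nonneg|lra].
  - rewrite !powr_pos by lra. apply Rle_Rpower_l; lra. Qed.

Lemma powr_one t : powr 1 t = 1.
Proof. rewrite powr_pos by lra. unfold Rpower. rewrite ln_1, Rmult_0_r, exp_0; auto. Qed.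

Lemma powr_lt1 x t : 0 <= x < 1 -> 0 < t -> powr x t < 1.
Proof. intros H Ht. destruct (Req_EM_T x 0) as [->|Hx].
  - unfold powr. destruct (Req_EM_T 0 0); lra.
  - rewrite powr_pos by lra. rewrite <- (powr_one t), powr_pos by lra. apply Rlt_Rpower_l; lra. Qed.

Lemma lsum_seq_sum f N : lsum f (seq 0 (S N)) = sum_f_R0 f N.
Proof. induction N. - simpl; ring. - rewrite seq_S, lsum_app, IHN. simpl. ring. Qed.

Lemma pow_le1' x n : 0 <= x <= 1 -> x ^ n <= 1.
Proof. intros H. induction n; simpl; [lra|].
  assert (0 <= x ^ n) by (apply pow_le; lra). nra. Qed.

Lemma count_eps (lam : nat -> R) (I : nat -> nat -> bool) (tau0 : R) (n r : nat) (S0 : R) d eps L :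
 (forall m, 0 <= lam m) -> 0 < tau0 -> (1 <= n)%nat -> (1 <= r)%nat -> 0 <= S0 ->
 (forall m, powr (lam m) tau0 <= 1) ->
 (forall N, lsum (fun m => powr (lam m) tau0 ^ n) (seq 0 N) <= S0) ->
 (forall N, lsum (fun m => powr (lam m) tau0 ^ n) (seq r N) <= /2) ->
 0 < eps -> NoDup L -> (forall k, In k L -> in_nabla_S I d k /\ prodlam lam k > eps^2) ->
 INR (length L) <= Rpower eps (-(2*tau0*INR n)) * (S0 ^ b_d I d * INR (S (a_d I d)) ^ (r-1) * 2).
Proof.
  intros Hl Ht Hn Hr HS0 H1 HS Hh He HL Hk.
  set (c0 := Rpower (eps^2) tau0).
  assert (Hc0 : 0 < c0) by (unfold c0, Rpower; apply exp_pos).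
  assert (Hc : Rpower eps (2*tau0*INR n) = c0 ^ n).
  { unfold c0. rewrite <- Rpower_pow by (unfold Rpower; apply exp_pos).
    rewrite Rpower_mult. replace (eps^2) with (Rpower eps (INR 2)) by (apply Rpower_pow; auto).
    rewrite Rpower_mult. f_equal. simpl. ring. }
  rewrite Rpower_Ropp, Hc.
  apply main_count with (mu := fun m => powr (lam m) tau0 ^ n); auto.
  - intros m. split. apply pow_le, powr_nonneg. apply pow_le1'. split; [apply powr_nonneg|auto].
  - apply pow_lt; auto.
  - intros k Hk'. destruct (Hk k Hk') as [A B]. split; auto.
    rewrite prodlam_pow, prodlam_powr by auto. apply Rlt_gt, pow_lt_strict; auto.
    split; [lra|]. rewrite powr_pos by nra. unfold c0. apply Rlt_Rpower_l; auto.
    split; [nra|lra].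
Qed.

Lemma tail_bound lam tau0 l n s N :
  (forall m k, (m <= k)%nat -> lam k <= lam m) -> (forall m, 0 <= lam m) -> 0 < tau0 ->
  (forall N, lsum (fun m => powr (lam m) tau0) (seq 0 N) <= l) -> (1 <= n)%nat ->
  lsum (fun m => powr (lam m) tau0 ^ n) (seq s N) <= powr (lam s) tau0 ^ (n-1) * l.
Proof.
  intros Ha Hn Ht Hl Hn1.
  apply Rle_trans with (lsum (fun m => powr (lam s) tau0 ^ (n-1) * powr (lam m) tau0) (seq s N)).
  - apply lsum_le. intros m Hm. apply in_seq in Hm.
    replace n with (S (n-1)) at 1 by lia. simpl. rewrite Rmult_comm.
    apply Rmult_le_compat_r; [apply powr_nonneg|]. apply pow_incr. split; [apply powr_nonneg|].
    apply powr_mono; auto. split; auto. apply Ha; lia.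
  - rewrite lsum_scal. apply Rmult_le_compat_l; [apply pow_le, powr_nonneg|].
    apply Rle_trans with (lsum (fun m => powr (lam m) tau0) (seq 0 (s + N))); auto.
    rewrite seq_app, lsum_app. simpl.
    assert (0 <= lsum (fun m => powr (lam m) tau0) (seq 0 s)) by (apply lsum_nonneg; intros; apply powr_nonneg).
    lra.
Qed.

Lemma choose_n v l : 0 <= v < 1 -> 0 <= l -> exists n, (1 <= n)%nat /\ v ^ (n-1) * l <= /2.
Proof.
  intros Hv Hl. assert (Hy : 0 < / (2 * (l + 1))) by (apply Rinv_0_lt_compat; lra).
  destruct (pow_lt_1_zero v ltac:(rewrite Rabs_pos_eq; lra) _ Hy) as [N HN].
  exists (S N). split; [lia|]. replace (S N - 1)%nat with N by lia.
  specialize (HN N (le_n _)). rewrite Rabs_pos_eq in HN by (apply pow_le; lra).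
  assert (E : / (2 * (l + 1)) * (2 * (l + 1)) = 1) by (field; lra).
  assert (0 <= v ^ N) by (apply pow_le; lra). nra.
Qed.

Lemma a_d_le I d : (a_d I d <= d)%nat.
Proof. unfold a_d. pose proof (filter_length_le (I d) (seq 0 d)). rewrite length_seq in H. exact H. Qed.

Theorem proposition5 (lam : nat -> R) (I : nat -> nat -> bool) (tau0 : R) :
  (forall m, 0 <= lam (S m) <= lam m) ->
  0 < lam 1%nat ->
  (forall d, (1 <= d)%nat -> exists i, (i < d)%nat /\ I d i = true) ->
  I 1%nat 0%nat = true ->
  0 < tau0 -> in_ell lam tau0 ->
  (lam 0%nat < 1 -> strongly_poly_tractable lam I) /\
  (lam 0%nat = 1 -> lam 1%nat < 1 ->
     (exists C : nat, forall d, (1 <= d)%nat -> (b_d I d <= C)%nat) ->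
     strongly_poly_tractable lam I) /\
  (lam 0%nat = 1 ->
     (exists C : R, forall d, (1 <= d)%nat -> INR (b_d I d) <= C * ln (INR d)) ->
     poly_tractable lam I).
Proof.
  intros Hmono H1pos _ _ Ht [l Hcv].
  set (nu := fun m => powr (lam m) tau0).
  assert (Hnn : forall m, 0 <= lam m).
  { intros [|m]; [pose proof (Hmono 0%nat)|pose proof (Hmono m)]; lra. }
  assert (Ha : forall m k, (m <= k)%nat -> lam k <= lam m).
  { intros m k H. induction H; [lra|]. pose proof (Hmono m0); lra. }
  assert (Hl : forall N, lsum nu (seq 0 N) <= l).
  { assert (Hg : forall N, sum_f_R0 nu N <= l).
    { apply growing_ineq; auto. intros N. simpl. pose proof (powr_nonneg (lam (S N)) tau0). unfold nu. lra. }
    intros [|N]. - simpl. pose proof (Hg 0%nat). simpl in H. pose proof (powr_nonneg (lam 0%nat) tau0). unfold nu in *. lra.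
    - rewrite lsum_seq_sum; auto. }
  assert (Hl0 : 0 <= l) by (pose proof (Hl 0%nat); simpl in H; lra).
  assert (Htail : forall n s N, (1 <= n)%nat -> lsum (fun m => nu m ^ n) (seq s N) <= nu s ^ (n-1) * l).
  { intros. apply tail_bound; auto. }
  assert (Hnu0 : forall m, 0 <= nu m) by (intros; apply powr_nonneg).
  assert (Hnu1 : lam 0%nat <= 1 -> forall m, nu m <= 1).
  { intros H m. unfold nu. rewrite <- (powr_one tau0). apply powr_mono; auto.
    split; auto. pose proof (Ha 0%nat m ltac:(lia)). lra. }
  assert (Hnumono : forall m k, (m <= k)%nat -> nu k <= nu m).
  { intros. apply powr_mono; auto. }
  assert (Hp : forall n, (1 <= n)%nat -> 0 < 2 * tau0 * INR n).
  { intros n Hn. apply lt_INR in Hn. simpl in Hn. nra. }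
  split; [|split].
  -
    intros H0. assert (Hv : 0 <= nu 0%nat < 1) by (split; auto; apply powr_lt1; auto).
    destruct (choose_n _ _ Hv Hl0) as [n [Hn Hnl]].
    exists 2, (2 * tau0 * INR n). split; [lra|]. split; [auto|].
    intros d eps Hd He L HL Hk.
    eapply Rle_trans.
    + apply (count_eps lam I tau0 n 1 1 d eps L); auto; try lra.
      * intros m; apply Hnu1; lra.
      * intros N. eapply Rle_trans; [apply Htail; auto|]. lra.
      * intros N. eapply Rle_trans; [apply Htail; auto|].
        eapply Rle_trans; [|apply Hnl]. apply Rmult_le_compat_r; auto.
        apply pow_incr. split; auto.
    + rewrite pow1. replace (INR (S (a_d I d)) ^ (1 - 1)) with 1 by (simpl; ring).
      assert (0 < Rpower eps (- (2 * tau0 * INR n))) by (unfold Rpower; apply exp_pos). lra.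
  -
    intros H0 H1 [Cn HCn]. assert (Hv : 0 <= nu 1%nat < 1) by (split; auto; apply powr_lt1; auto).
    destruct (choose_n _ _ Hv Hl0) as [n [Hn Hnl]].
    set (S0 := Rmax 1 l). assert (HS1 : 1 <= S0) by apply Rmax_l.
    assert (HSl : l <= S0) by apply Rmax_r.
    exists (2 * S0 ^ Cn), (2 * tau0 * INR n). split.
    { assert (0 < S0 ^ Cn) by (apply pow_lt; lra). lra. } split; [auto|].
    intros d eps Hd He L HL Hk.
    eapply Rle_trans.
    + apply (count_eps lam I tau0 n 1 S0 d eps L); auto; try lra.
      * intros m; apply Hnu1; lra.
      * intros N. eapply Rle_trans; [apply Htail; auto|].
        assert (nu 0%nat ^ (n-1) <= 1) by (apply pow_le1'; split; auto; apply Hnu1; lra).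
        assert (0 <= nu 0%nat ^ (n-1)) by (apply pow_le; auto). nra.
      * intros N. eapply Rle_trans; [apply Htail; auto|]. auto.
    + replace (INR (S (a_d I d)) ^ (1 - 1)) with 1 by (simpl; ring).
      assert (0 < Rpower eps (- (2 * tau0 * INR n))) by (unfold Rpower; apply exp_pos).
      assert (S0 ^ b_d I d <= S0 ^ Cn) by (apply Rle_pow; auto).
      nra.
  -
    intros H0 [C HC].
    assert (Hr : exists r, lam r < 1).
    { apply NNPP. intros Hno.
      assert (Hge : forall m, 1 <= nu m).
      { intros m. assert (1 <= lam m) by (apply Rnot_lt_le; intros Hlt; apply Hno; eauto).
        rewrite <- (powr_one tau0). apply powr_mono; auto; lra. }
      destruct (INR_unbounded l) as [N HN].
      assert (INR N <= lsum nu (seq 0 N)).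
      { rewrite <- (Rmult_1_l (INR N)), <- (length_seq N 0) at 1. rewrite <- lsum_const.
        apply lsum_le; auto. }
      specialize (Hl N). lra. }
    destruct Hr as [r Hr].
    assert (Hr1 : (1 <= r)%nat) by (destruct r; [lra|lia]).
    assert (Hv : 0 <= nu r < 1) by (split; auto; apply powr_lt1; auto).
    destruct (choose_n _ _ Hv Hl0) as [n [Hn Hnl]].
    set (S0 := Rmax 1 l). assert (HS1 : 1 <= S0) by apply Rmax_l.
    assert (HSl : l <= S0) by apply Rmax_r.
    set (Cp := Rmax C 0). assert (HCp : 0 <= Cp) by apply Rmax_r. assert (HCC : C <= Cp) by apply Rmax_l.
    assert (HlnS : 0 <= ln S0) by (rewrite <- ln_1; apply ln_le'; lra).
    exists (2 * 2 ^ (r-1)), (2 * tau0 * INR n), (Cp * ln S0 + INR (r-1)).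
    split; [assert (0 < 2 ^ (r-1)) by (apply pow_lt; lra); lra|].
    split; [auto|]. split; [apply Rplus_le_le_0_compat; [apply Rmult_le_pos; auto|apply pos_INR]|].
    intros d eps Hd He L HL Hk.
    eapply Rle_trans.
    + apply (count_eps lam I tau0 n r S0 d eps L); auto; try lra.
      * intros m; apply Hnu1; lra.
      * intros N. eapply Rle_trans; [apply Htail; auto|].
        assert (nu 0%nat ^ (n-1) <= 1) by (apply pow_le1'; split; auto; apply Hnu1; lra).
        assert (0 <= nu 0%nat ^ (n-1)) by (apply pow_le; auto). nra.
      * intros N. eapply Rle_trans; [apply Htail; auto|]. auto.
    + assert (HE : 0 < Rpower eps (- (2 * tau0 * INR n))) by (unfold Rpower; apply exp_pos).
      assert (Hd1 : 1 <= INR d) by (apply (le_INR 1); auto).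
      assert (Hlnd : 0 <= ln (INR d)) by (rewrite <- ln_1; apply ln_le'; lra).
      assert (HA : S0 ^ b_d I d <= Rpower (INR d) (Cp * ln S0)).
      { rewrite <- Rpower_pow by lra. unfold Rpower. apply exp_le'.
        specialize (HC d Hd). assert (C * ln (INR d) <= Cp * ln (INR d)) by nra. nra. }
      assert (HB : INR (S (a_d I d)) ^ (r-1) <= 2 ^ (r-1) * Rpower (INR d) (INR (r-1))).
      { rewrite Rpower_pow by lra. rewrite <- Rpow_mult_distr. apply pow_incr.
        split; [apply pos_INR|]. rewrite S_INR. pose proof (le_INR _ _ (a_d_le I d)). lra. }
      rewrite Rpower_plus.
      assert (0 <= S0 ^ b_d I d) by (apply pow_le; lra).
      assert (0 <= INR (S (a_d I d)) ^ (r-1)) by (apply pow_le, pos_INR).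
      assert (0 <= 2 ^ (r - 1)) by (apply pow_le; lra).
      assert (0 < Rpower (INR d) (Cp * ln S0)) by (unfold Rpower; apply exp_pos).
      assert (0 < Rpower (INR d) (INR (r-1))) by (unfold Rpower; apply exp_pos).
      assert (S0 ^ b_d I d * INR (S (a_d I d)) ^ (r-1) <= Rpower (INR d) (Cp * ln S0) * (2 ^ (r-1) * Rpower (INR d) (INR (r-1))))
        by (apply Rmult_le_compat; auto).
      apply Rle_trans with (Rpower eps (- (2 * tau0 * INR n)) * ((Rpower (INR d) (Cp * ln S0) * (2 ^ (r-1) * Rpower (INR d) (INR (r-1)))) * 2)).
      * apply Rmult_le_compat_l; [lra|]. apply Rmult_le_compat_r; lra.
      * right; ring.
Qed.
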